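(* Let $\lambda=\frac{\sqrt5+1}{2}$, $D\mathcal{G}_{\mathbf 0}=\mathrm{diag}(-1,\lambda^{-1},\lambda)$, $M>0$, $C_0>0$, $\Delta_0=\tfrac14$ and $C=1+C_0+\Delta_0$. There exists $\xi_0=\xi_0(C_0,\Delta_0)>0$ such that for all $\xi\in(0,\xi_0)$ and $\Delta\in(0,\Delta_0)$ the following holds. Let $G=(G_x,G_y,G_z):\mathbb{R}^3\to\mathbb{R}^3$ be a $C^2$ diffeomorphism with $\|\nabla\partial_\beta G_\alpha\|<M$ for all $\alpha,\beta\in\{x,y,z\}$ and $G$ $\xi$-close to $D\mathcal{G}_{\mathbf 0}$ in the $C^1$ topology. Let $\gamma=(\gamma_x,\gamma_y,\gamma_z)$ be a $C^2$ curve such that for all $t$: $\|\gamma'(t)\|<C$, $\gamma_x(t)=t$, $\frac{\lambda-\xi-1}{4}|\gamma_z''(t)|>3MC^2$, $\frac{\lambda-\xi-1}{4}|\gamma_z''(t)|>\xi|\gamma_y''(t)|$, $|\gamma_y'(t)|<C_0$ and $|\gamma_z'(t)|<\Delta$. Assume that for some $m\in\mathbb{N}$ and all $n\in\{1,\dots,m\}$: - $G^n\circ\gamma$ can be reparameterized as $\gamma^{(n)}(s)=(s,\gamma^{(n)}_y(s),\gamma^{(n)}_z(s))$ (i.e. $\frac{d}{dt}G^n_x\circ\gamma\neq0$), where $\gamma^{(0)}=\gamma$; - $|\frac{d}{ds}\gamma^{(n)}_y(s)|<C_0$ and $|\frac{d}{ds}\gamma^{(n)}_z(s)|<\Delta$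 for all $s$. Then $\big|\frac{d^2}{ds^2}\gamma^{(n)}_z(\tilde s)\big|>\big|\frac{d^2}{dt^2}\gamma^{(n-1)}_z(\tilde t)\big|$ for all $n\in\{1,\dots,m-1\}$ and all $\tilde t,\tilde s$ with $\gamma^{(n)}(\tilde s)=G\circ\gamma^{(n-1)}(\tilde t)$.
   Context: Each $\gamma^{(n)}$ is the curve with the same image as $G\circ\gamma^{(n-1)}$, parameterized so that its $x$-coordinate equals the parameter; $t$ denotes the parameter of $\gamma^{(n-1)}$ and $s$ that of $\gamma^{(n)}$. *)

(* Defs.v *)
From Stdlib Require Import Reals.
From Coquelicot Require Import Coquelicot.
Open Scope R_scope.

Definition pt : Type := (R * R * R)%type.

Inductive ax := AX | AY | AZ.

Definition coord (a : ax) (p : pt) : R :=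
  match a with
  | AX => fst (fst p)
  | AY => snd (fst p)
  | AZ => snd p
  end.

Definition shift (p : pt) (a : ax) (h : R) : pt :=
  match a with
  | AX => (fst (fst p) + h, snd (fst p), snd p)
  | AY => (fst (fst p), snd (fst p) + h, snd p)
  | AZ => (fst (fst p), snd (fst p), snd p + h)
  end.

Definition pderiv (a : ax) (f : pt -> R) (p : pt) : R :=
  Derive (fun h => f (shift p a h)) 0.
Definition has_pderiv (a : ax) (f : pt -> R) (p : pt) : Prop :=
  ex_derive (fun h => f (shift p a h)) 0.

Definition C2fun (f : pt -> R) : Prop :=
  (forall a p, has_pderiv a f p) /\
  (forall a b p, has_pderiv b (pderiv a f) p) /\
  (forall a b p, continuous (pderiv b (pderiv a f)) p).

Definition C2map (G : pt -> pt) : Prop :=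
  forall a, C2fun (fun p => coord a (G p)).

Definition C2diffeo (G : pt -> pt) : Prop :=
  C2map G /\
  exists H : pt -> pt, C2map H /\ (forall p, H (G p) = p) /\ (forall p, G (H p) = p).

Definition lam : R := (sqrt 5 + 1) / 2.

Definition DG0 (p : pt) : pt := (- coord AX p, coord AY p / lam, lam * coord AZ p).
Definition DG0_entry (a b : ax) : R :=
  match a, b with
  | AX, AX => -1
  | AY, AY => / lam
  | AZ, AZ => lam
  | _, _ => 0
  end.

Definition C1_close (xi : R) (G : pt -> pt) : Prop :=
  forall p,
    (forall a, Rabs (coord a (G p) - coord a (DG0 p)) < xi) /\
    (forall a b, Rabs (pderiv b (fun q => coord a (G q)) p - DG0_entry a b) < xi).

Definition norm3 (u v w : R) : R := sqrt (u ^ 2 + v ^ 2 + w ^ 2).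

Definition hess_bound (M : R) (G : pt -> pt) : Prop :=
  forall a b p,
    let g := pderiv b (fun q => coord a (G q)) in
    norm3 (pderiv AX g p) (pderiv AY g p) (pderiv AZ g p) < M.

Definition C2_at (f : R -> R) (t : R) : Prop :=
  ex_derive f t /\ ex_derive (Derive f) t /\ continuous (Derive (Derive f)) t.

Definition D2 (f : R -> R) (t : R) : R := Derive (Derive f) t.

Definition curve (fy fz : R -> R) (s : R) : pt := (s, fy s, fz s).

Definition Delta0 : R := / 4.

(* Main.v *)
Require Import Defs.
From Stdlib Require Import Reals Lra Psatz.
From Coquelicot Require Import Coquelicot.
Open Scope R_scope.

Lemma shift_shift r b h1 h2 : shift (shift r b h1) b h2 = shift r b (h1 + h2).
Proof. destruct r as [[x y] z]; destruct b; simpl; rewrite Rplus_assoc; reflexivity. Qed.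

Lemma shift0 r b : shift r b 0 = r.
Proof. destruct r as [[x y] z]; destruct b; simpl; rewrite Rplus_0_r; reflexivity. Qed.

Definition allpd (f : pt -> R) := forall a q, has_pderiv a f q.

Lemma pd_is_derive f r b h0 : allpd f ->
  is_derive (fun h => f (shift r b h)) h0 (pderiv b f (shift r b h0)).
Proof.
  intros Hf.
  set (q := shift r b h0).
  assert (H1 : is_derive (fun h => f (shift q b h)) (h0 - h0) (pderiv b f q)).
  { replace (h0 - h0) with 0 by ring. apply Derive_correct. apply Hf. }
  assert (H2 : is_derive (fun h : R => h - h0) h0 1).
  { auto_derive; auto; ring. }
  pose proof (is_derive_comp (fun h => f (shift q b h)) (fun h => h - h0) h0 _ _ H1 H2) as H3.
  replace (pderiv b f q) with (scal 1 (pderiv b f q))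
    by (unfold scal; simpl; unfold mult; simpl; ring).
  eapply is_derive_ext; [| exact H3].
  intros h; simpl. unfold q. rewrite shift_shift. f_equal. f_equal. ring.
Qed.

Lemma mvt_dir f r b h : allpd f ->
  exists c, Rabs c <= Rabs h /\ f (shift r b h) - f r = pderiv b f (shift r b c) * h.
Proof.
  intros Hf.
  destruct (MVT_gen (fun h => f (shift r b h)) 0 h (fun c => pderiv b f (shift r b c))) as [c [Hc E]].
  - intros x _. apply pd_is_derive; auto.
  - intros x _. apply continuity_pt_filterlim. apply (ex_derive_continuous (fun h0 => f (shift r b h0))).
    eexists. apply pd_is_derive; auto.
  - exists c. split.
    + revert Hc. unfold Rmin, Rmax. destruct (Rle_dec 0 h); intros; unfold Rabs;
      destruct (Rcase_abs c); destruct (Rcase_abs h); lra.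
    + rewrite shift0 in E. rewrite E. ring.
Qed.

Definition cont3 (g : pt -> R) (px py pz : R) := forall eps, 0 < eps -> exists d, 0 < d /\
  forall x y z, Rabs (x - px) < d -> Rabs (y - py) < d -> Rabs (z - pz) < d ->
  Rabs (g (x, y, z) - g (px, py, pz)) < eps.

Lemma continuous_cont3 g px py pz : continuous g (px, py, pz) -> cont3 g px py pz.
Proof.
  intros Hc eps He.
  destruct (proj1 (filterlim_locally _ _) Hc (mkposreal eps He)) as [d Hd].
  exists d. split; [apply cond_pos|]. intros x y z H1 H2 H3.
  specialize (Hd (x, y, z)).
  assert (B : ball (px, py, pz) d (x, y, z)).
  { repeat split; unfold ball; simpl; unfold AbsRing_ball, abs, minus, plus, opp; simpl; auto. }
  specialize (Hd B). revert Hd. unfold ball; simpl; unfold AbsRing_ball, abs, minus, plus, opp; simpl. auto.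
Qed.

Lemma err3 (e a1 a2 a3 d1 d2 d3 : R) : Rabs a1 < e -> Rabs a2 < e -> Rabs a3 < e ->
  Rabs (a1 * d1 + a2 * d2 + a3 * d3) <= e * (Rabs d1 + Rabs d2 + Rabs d3).
Proof.
  intros.
  eapply Rle_trans. apply Rabs_triang.
  eapply Rle_trans. apply Rplus_le_compat_r. apply Rabs_triang.
  rewrite !Rabs_mult.
  pose proof (Rabs_pos d1); pose proof (Rabs_pos d2); pose proof (Rabs_pos d3).
  nra.
Qed.

Lemma frechet f px py pz : allpd f -> (forall a, cont3 (pderiv a f) px py pz) ->
  forall eps, 0 < eps -> exists d, 0 < d /\ forall x y z,
  Rabs (x - px) < d -> Rabs (y - py) < d -> Rabs (z - pz) < d ->
  Rabs (f (x, y, z) - f (px, py, pz) -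
     (pderiv AX f (px, py, pz) * (x - px) + pderiv AY f (px, py, pz) * (y - py)
      + pderiv AZ f (px, py, pz) * (z - pz)))
  <= eps * (Rabs (x - px) + Rabs (y - py) + Rabs (z - pz)).
Proof.
  intros Hf Hc eps He.
  destruct (Hc AX eps He) as [d1 [Hd1 C1]].
  destruct (Hc AY eps He) as [d2 [Hd2 C2]].
  destruct (Hc AZ eps He) as [d3 [Hd3 C3]].
  exists (Rmin d1 (Rmin d2 d3)). split.
  { apply Rmin_pos; auto; apply Rmin_pos; auto. }
  intros x y z Hx Hy Hz.
  pose proof (Rmin_l d1 (Rmin d2 d3)). pose proof (Rmin_r d1 (Rmin d2 d3)).
  pose proof (Rmin_l d2 d3). pose proof (Rmin_r d2 d3).
  destruct (mvt_dir f (px, y, z) AX (x - px) Hf) as [c1 [Hc1 E1]].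
  destruct (mvt_dir f (px, py, z) AY (y - py) Hf) as [c2 [Hc2 E2]].
  destruct (mvt_dir f (px, py, pz) AZ (z - pz) Hf) as [c3 [Hc3 E3]].
  simpl in E1, E2, E3.
  replace (px + (x - px)) with x in E1 by ring.
  replace (py + (y - py)) with y in E2 by ring.
  replace (pz + (z - pz)) with z in E3 by ring.
  assert (K1 : Rabs (pderiv AX f (px + c1, y, z) - pderiv AX f (px, py, pz)) < eps).
  { apply C1; replace (px + c1 - px) with c1 by ring; lra. }
  assert (K2 : Rabs (pderiv AY f (px, py + c2, z) - pderiv AY f (px, py, pz)) < eps).
  { apply C2; try replace (py + c2 - py) with c2 by ring; try replace (px - px) with 0 by ring;
    try rewrite Rabs_R0; lra. }
  assert (K3 : Rabs (pderiv AZ f (px, py, pz + c3) - pderiv AZ f (px, py, pz)) < eps).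
  { apply C3; try replace (pz + c3 - pz) with c3 by ring; try replace (px - px) with 0 by ring;
    try replace (py - py) with 0 by ring; try rewrite Rabs_R0; lra. }
  pose proof (err3 _ _ _ _ (x - px) (y - py) (z - pz) K1 K2 K3) as R.
  match goal with |- Rabs ?L <= _ => replace L with
   ((pderiv AX f (px + c1, y, z) - pderiv AX f (px, py, pz)) * (x - px) +
    (pderiv AY f (px, py + c2, z) - pderiv AY f (px, py, pz)) * (y - py) +
    (pderiv AZ f (px, py, pz + c3) - pderiv AZ f (px, py, pz)) * (z - pz)) end.
  exact R.
  lra.
Qed.

Lemma dq_bound f x l e : derivable_pt_lim f x l -> 0 < e -> exists d, 0 < d /\
  forall h, h <> 0 -> Rabs h < d -> Rabs ((f (x + h) - f x) / h - l) < e /\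
   Rabs ((f (x + h) - f x) / h) <= Rabs l + e.
Proof.
  intros H He. destruct (H e He) as [d Hd]. exists d. split; [apply cond_pos|].
  intros h Hh1 Hh2. specialize (Hd h Hh1 Hh2). split; auto.
  pose proof (Rabs_triang_inv ((f (x + h) - f x) / h) l). lra.
Qed.

Lemma chain_curve f (y z : R -> R) u0 y' z' :
  allpd f -> (forall a, cont3 (pderiv a f) u0 (y u0) (z u0)) ->
  is_derive y u0 y' -> is_derive z u0 z' ->
  is_derive (fun u => f (u, y u, z u)) u0
    (pderiv AX f (u0, y u0, z u0) + pderiv AY f (u0, y u0, z u0) * y'
      + pderiv AZ f (u0, y u0, z u0) * z').
Proof.
  intros Hf Hc Hy Hz. apply is_derive_Reals in Hy. apply is_derive_Reals in Hz.
  apply is_derive_Reals. intros eps He.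
  set (a := pderiv AX f (u0, y u0, z u0)).
  set (b := pderiv AY f (u0, y u0, z u0)).
  set (c := pderiv AZ f (u0, y u0, z u0)).
  set (K := 3 + Rabs y' + Rabs z').
  assert (HK : 0 < K) by (unfold K; pose proof (Rabs_pos y'); pose proof (Rabs_pos z'); lra).
  set (eta := eps / (4 * K)).
  assert (Heta : 0 < eta) by (unfold eta; apply Rdiv_lt_0_compat; lra).
  destruct (frechet f u0 (y u0) (z u0) Hf Hc eta Heta) as [d0 [Hd0 F0]].
  set (ey := Rmin 1 (eps / (4 * (Rabs b + 1)))).
  set (ez := Rmin 1 (eps / (4 * (Rabs c + 1)))).
  assert (Hb1 : 0 < Rabs b + 1) by (pose proof (Rabs_pos b); lra).
  assert (Hc1 : 0 < Rabs c + 1) by (pose proof (Rabs_pos c); lra).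
  assert (Hey : 0 < ey) by (unfold ey; apply Rmin_pos; [lra| apply Rdiv_lt_0_compat; lra]).
  assert (Hez : 0 < ez) by (unfold ez; apply Rmin_pos; [lra| apply Rdiv_lt_0_compat; lra]).
  destruct (dq_bound y u0 y' ey Hy Hey) as [dy [Hdy Dy]].
  destruct (dq_bound z u0 z' ez Hz Hez) as [dz [Hdz Dz]].
  set (d := Rmin (Rmin dy dz) (Rmin d0 (d0 / K))).
  assert (Hd : 0 < d) by (unfold d; repeat apply Rmin_pos; try apply Rdiv_lt_0_compat; lra).
  exists (mkposreal d Hd). simpl. intros h Hh0 Hh.
  assert (hdy : Rabs h < dy) by (unfold d in Hh; pose proof (Rmin_l (Rmin dy dz) (Rmin d0 (d0 / K))); pose proof (Rmin_l dy dz); lra).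
  assert (hdz : Rabs h < dz) by (unfold d in Hh; pose proof (Rmin_l (Rmin dy dz) (Rmin d0 (d0 / K))); pose proof (Rmin_r dy dz); lra).
  assert (hd0 : Rabs h < d0) by (unfold d in Hh; pose proof (Rmin_r (Rmin dy dz) (Rmin d0 (d0 / K))); pose proof (Rmin_l d0 (d0/K)); lra).
  assert (hdK : Rabs h < d0 / K) by (unfold d in Hh; pose proof (Rmin_r (Rmin dy dz) (Rmin d0 (d0 / K))); pose proof (Rmin_r d0 (d0/K)); lra).
  destruct (Dy h Hh0 hdy) as [Qy1 Qy2]. destruct (Dz h Hh0 hdz) as [Qz1 Qz2].
  set (qy := (y (u0 + h) - y u0) / h) in *.
  set (qz := (z (u0 + h) - z u0) / h) in *.
  assert (Ey : y (u0 + h) - y u0 = qy * h) by (unfold qy; field; auto).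
  assert (Ez : z (u0 + h) - z u0 = qz * h) by (unfold qz; field; auto).
  assert (eyle : ey <= 1) by apply Rmin_l.
  assert (ezle : ez <= 1) by apply Rmin_l.
  assert (Hah : 0 < Rabs h) by (apply Rabs_pos_lt; auto).
  assert (KK : Rabs h * K = d0 / K * K - (d0/K - Rabs h) * K) by ring.
  assert (KK2 : d0 / K * K = d0) by (field; lra).
  assert (Ay : Rabs (y (u0 + h) - y u0) < d0).
  { rewrite Ey, Rabs_mult. pose proof (Rabs_pos qy). unfold K in *.
    pose proof (Rabs_pos y'); pose proof (Rabs_pos z'). nra. }
  assert (Az : Rabs (z (u0 + h) - z u0) < d0).
  { rewrite Ez, Rabs_mult. pose proof (Rabs_pos qz). unfold K in *.
    pose proof (Rabs_pos y'); pose proof (Rabs_pos z'). nra. }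
  specialize (F0 (u0 + h) (y (u0 + h)) (z (u0 + h))).
  replace (u0 + h - u0) with h in F0 by ring.
  specialize (F0 hd0 Ay Az). fold a b c in F0.
  rewrite Ey, Ez in F0.
  set (Rr := f (u0 + h, y (u0 + h), z (u0 + h)) - f (u0, y u0, z u0) - (a * h + b * (qy * h) + c * (qz * h))) in F0.
  replace ((f (u0 + h, y (u0 + h), z (u0 + h)) - f (u0, y u0, z u0)) / h - (a + b * y' + c * z'))
    with (b * (qy - y') + c * (qz - z') + Rr / h) by (unfold Rr; field; auto).
  assert (R1 : Rabs (Rr / h) <= eta * (1 + Rabs qy + Rabs qz)).
  { unfold Rdiv. rewrite Rabs_mult, Rabs_inv.
    rewrite !Rabs_mult in F0.
    apply (Rmult_le_reg_r (Rabs h)); auto.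
    rewrite Rmult_assoc, Rinv_l by lra. nra. }
  assert (R2 : eta * (1 + Rabs qy + Rabs qz) <= eps / 4).
  { replace (eps / 4) with (eta * K) by (unfold eta; field; lra).
    apply Rmult_le_compat_l; [lra|]. unfold K. lra. }
  assert (R3 : Rabs (b * (qy - y')) <= eps / 4).
  { rewrite Rabs_mult. assert (ey <= eps / (4 * (Rabs b + 1))) by apply Rmin_r.
    assert (Rabs b * Rabs (qy - y') <= (Rabs b + 1) * ey).
    { pose proof (Rabs_pos b); pose proof (Rabs_pos (qy - y')); nra. }
    assert ((Rabs b + 1) * ey <= eps / 4).
    { replace (eps / 4) with ((Rabs b + 1) * (eps / (4 * (Rabs b + 1)))) by (field; lra).
      apply Rmult_le_compat_l; lra. }
    lra. }
  assert (R4 : Rabs (c * (qz - z')) <= eps / 4).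
  { rewrite Rabs_mult. assert (ez <= eps / (4 * (Rabs c + 1))) by apply Rmin_r.
    assert (Rabs c * Rabs (qz - z') <= (Rabs c + 1) * ez).
    { pose proof (Rabs_pos c); pose proof (Rabs_pos (qz - z')); nra. }
    assert ((Rabs c + 1) * ez <= eps / 4).
    { replace (eps / 4) with ((Rabs c + 1) * (eps / (4 * (Rabs c + 1)))) by (field; lra).
      apply Rmult_le_compat_l; lra. }
    lra. }
  pose proof (Rabs_triang (b * (qy - y') + c * (qz - z')) (Rr / h)).
  pose proof (Rabs_triang (b * (qy - y')) (c * (qz - z'))).
  lra.
Qed.

Lemma isd_plus (f g : R -> R) x a b : is_derive f x a -> is_derive g x b ->
  is_derive (fun t => f t + g t) x (a + b).
Proof. intros. exact (is_derive_plus f g x a b H H0). Qed.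

Lemma isd_mult (f g : R -> R) x a b : is_derive f x a -> is_derive g x b ->
  is_derive (fun t => f t * g t) x (a * g x + f x * b).
Proof. intros. exact (is_derive_mult f g x a b H H0 Rmult_comm). Qed.

Lemma frechet_cont f px py pz : allpd f -> (forall a, cont3 (pderiv a f) px py pz) ->
  cont3 f px py pz.
Proof.
  intros Hf Hc eps He.
  destruct (frechet f px py pz Hf Hc 1 Rlt_0_1) as [d0 [Hd0 F0]].
  set (a := pderiv AX f (px, py, pz)) in *.
  set (b := pderiv AY f (px, py, pz)) in *.
  set (c := pderiv AZ f (px, py, pz)) in *.
  set (K := Rabs a + Rabs b + Rabs c + 1).
  assert (HK : 0 < K) by (unfold K; pose proof (Rabs_pos a); pose proof (Rabs_pos b); pose proof (Rabs_pos c); lra).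
  exists (Rmin d0 (eps / (3 * K))). split.
  { apply Rmin_pos; auto. apply Rdiv_lt_0_compat; lra. }
  intros x y z Hx Hy Hz.
  pose proof (Rmin_l d0 (eps / (3 * K))). pose proof (Rmin_r d0 (eps / (3 * K))).
  specialize (F0 x y z ltac:(lra) ltac:(lra) ltac:(lra)).
  set (L := a * (x - px) + b * (y - py) + c * (z - pz)) in F0.
  assert (HL : Rabs L <= (Rabs a + Rabs b + Rabs c) * (Rabs (x - px) + Rabs (y - py) + Rabs (z - pz))).
  { unfold L. eapply Rle_trans. apply Rabs_triang.
    eapply Rle_trans. apply Rplus_le_compat_r. apply Rabs_triang.
    rewrite !Rabs_mult.
    pose proof (Rabs_pos a); pose proof (Rabs_pos b); pose proof (Rabs_pos c).
    pose proof (Rabs_pos (x - px)); pose proof (Rabs_pos (y - py)); pose proof (Rabs_pos (z - pz)).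
    nra. }
  set (S := Rabs (x - px) + Rabs (y - py) + Rabs (z - pz)) in *.
  assert (HS : S < eps / K).
  { unfold S. replace (eps / K) with (3 * (eps / (3 * K))) by (field; lra). lra. }
  assert (HS0 : 0 <= S) by (unfold S; pose proof (Rabs_pos (x - px)); pose proof (Rabs_pos (y - py)); pose proof (Rabs_pos (z - pz)); lra).
  replace (f (x, y, z) - f (px, py, pz)) with ((f (x, y, z) - f (px, py, pz) - L) + L) by ring.
  eapply Rle_lt_trans. apply Rabs_triang.
  assert (K * S < eps).
  { replace eps with (K * (eps / K)) by (field; lra). apply Rmult_lt_compat_l; auto. }
  unfold K in *. nra.
Qed.

Definition Cpd (g : pt -> R) := allpd g /\ (forall b, allpd (pderiv b g)) /\
  (forall a b p, continuous (pderiv a (pderiv b g)) p).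

Lemma Cpd_cont2 g : Cpd g -> forall a b px py pz, cont3 (pderiv a (pderiv b g)) px py pz.
Proof. intros [_ [_ H]] a b px py pz. apply continuous_cont3, H. Qed.

Lemma Cpd_cont1 g : Cpd g -> forall b px py pz, cont3 (pderiv b g) px py pz.
Proof.
  intros Hg b px py pz. apply frechet_cont. apply Hg.
  intros a. apply Cpd_cont2; auto.
Qed.

Lemma C2fun_Cpd g : C2fun g -> Cpd g.
Proof.
  intros [H1 [H2 H3]]. split; [|split].
  - exact H1.
  - intros b a q. apply H2.
  - intros a b p. apply H3.
Qed.

Lemma chain1 g y z u : Cpd g -> ex_derive y u -> ex_derive z u ->
  is_derive (fun u => g (u, y u, z u)) u
   (pderiv AX g (u, y u, z u) + pderiv AY g (u, y u, z u) * Derive y u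
    + pderiv AZ g (u, y u, z u) * Derive z u).
Proof.
  intros Hg Hy Hz. refine (chain_curve g y z u (Derive y u) (Derive z u) _ _ _ _).
  - exact (proj1 Hg).
  - intros a. exact (Cpd_cont1 g Hg a u (y u) (z u)).
  - exact (Derive_correct _ _ Hy).
  - exact (Derive_correct _ _ Hz).
Qed.

Lemma chain2 g y z u0 d : Cpd g -> 0 < d ->
  (forall u, Rabs (u - u0) < d -> ex_derive y u /\ ex_derive z u) ->
  ex_derive (Derive y) u0 -> ex_derive (Derive z) u0 ->
  is_derive (Derive (fun u => g (u, y u, z u))) u0
   ((pderiv AX (pderiv AX g) (u0, y u0, z u0) + pderiv AY (pderiv AX g) (u0, y u0, z u0) * Derive y u0
      + pderiv AZ (pderiv AX g) (u0, y u0, z u0) * Derive z u0)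
    + ((pderiv AX (pderiv AY g) (u0, y u0, z u0) + pderiv AY (pderiv AY g) (u0, y u0, z u0) * Derive y u0
      + pderiv AZ (pderiv AY g) (u0, y u0, z u0) * Derive z u0) * Derive y u0
       + pderiv AY g (u0, y u0, z u0) * Derive (Derive y) u0)
    + ((pderiv AX (pderiv AZ g) (u0, y u0, z u0) + pderiv AY (pderiv AZ g) (u0, y u0, z u0) * Derive y u0
      + pderiv AZ (pderiv AZ g) (u0, y u0, z u0) * Derive z u0) * Derive z u0
       + pderiv AZ g (u0, y u0, z u0) * Derive (Derive z) u0)).
Proof.
  intros Hg Hd Hloc Hy2 Hz2.
  destruct (Hloc u0) as [Hy1 Hz1]. { rewrite Rminus_diag, Rabs_R0; auto. }
  assert (Hb : forall b, is_derive (fun u => pderiv b g (u, y u, z u)) u0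
     (pderiv AX (pderiv b g) (u0, y u0, z u0) + pderiv AY (pderiv b g) (u0, y u0, z u0) * Derive y u0
      + pderiv AZ (pderiv b g) (u0, y u0, z u0) * Derive z u0)).
  { intros b. refine (chain_curve (pderiv b g) y z u0 (Derive y u0) (Derive z u0) _ _ _ _).
    - exact (proj1 (proj2 Hg) b).
    - intros a. exact (Cpd_cont2 g Hg a b u0 (y u0) (z u0)).
    - exact (Derive_correct _ _ Hy1).
    - exact (Derive_correct _ _ Hz1). }
  pose proof (Derive_correct _ _ Hy2) as Dy2.
  pose proof (Derive_correct _ _ Hz2) as Dz2.
  pose proof (isd_mult _ _ _ _ _ (Hb AY) Dy2) as My.
  pose proof (isd_mult _ _ _ _ _ (Hb AZ) Dz2) as Mz.
  pose proof (isd_plus _ _ _ _ _ (isd_plus _ _ _ _ _ (Hb AX) My) Mz) as S.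
  refine (is_derive_ext_loc _ _ _ _ _ S).
  exists (mkposreal d Hd). intros u Hu.
  assert (Hu' : Rabs (u - u0) < d).
  { revert Hu. unfold ball; simpl; unfold AbsRing_ball, abs, minus, plus, opp; simpl. auto. }
  destruct (Hloc u Hu') as [Hyu Hzu].
  symmetry. apply is_derive_unique. exact (chain1 g y z u Hg Hyu Hzu).
Qed.

Lemma loc_ball u0 d (P : R -> Prop) : 0 < d -> (forall u, Rabs (u - u0) < d -> P u) -> locally u0 P.
Proof.
  intros Hd H. exists (mkposreal d Hd). intros u Hu. apply H.
  revert Hu. unfold ball; simpl; unfold AbsRing_ball, abs, minus, plus, opp; simpl. auto.
Qed.

Lemma reparam (X Z W : R -> R) u0 d : 0 < d ->
  (forall u, Rabs (u - u0) < d -> W (X u) = Z u /\ ex_derive X u /\ ex_derive W (X u)) ->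
  ex_derive (Derive X) u0 -> ex_derive (Derive W) (X u0) ->
  Derive (Derive W) (X u0) * (Derive X u0 * Derive X u0) + Derive W (X u0) * Derive (Derive X) u0
  = Derive (Derive Z) u0.
Proof.
  intros Hd H HX2 HW2.
  assert (L1 : forall u, Rabs (u - u0) < d -> Derive Z u = Derive W (X u) * Derive X u).
  { intros u Hu. apply is_derive_unique.
    destruct (H u Hu) as [_ [HXu HWu]].
    pose proof (is_derive_comp W X u _ _ (Derive_correct _ _ HWu) (Derive_correct _ _ HXu)) as C.
    replace (Derive W (X u) * Derive X u) with (scal (Derive X u) (Derive W (X u)))
      by (unfold scal; simpl; unfold mult; simpl; ring).
    refine (is_derive_ext_loc _ _ _ _ _ C).
    set (e := d - Rabs (u - u0)).
    assert (He : 0 < e) by (unfold e; lra).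
    apply (loc_ball u e); auto. intros v Hv.
    assert (Rabs (v - u0) < d).
    { replace (v - u0) with ((v - u) + (u - u0)) by ring.
      pose proof (Rabs_triang (v - u) (u - u0)). unfold e in Hv. lra. }
    destruct (H v H0) as [E _]. exact E. }
  symmetry. apply is_derive_unique.
  destruct (H u0) as [_ [HX0 _]]. { rewrite Rminus_diag, Rabs_R0; auto. }
  pose proof (is_derive_comp (Derive W) X u0 _ _ (Derive_correct _ _ HW2) (Derive_correct _ _ HX0)) as C1.
  pose proof (isd_mult _ _ _ _ _ C1 (Derive_correct _ _ HX2)) as C2.
  refine (is_derive_ext_loc (fun u => Derive W (X u) * Derive X u) _ _ _ _ _).
  - apply (loc_ball u0 d). exact Hd. intros u Hu. symmetry. exact (L1 u Hu).
  - replace (Derive (Derive W) (X u0) * (Derive X u0 * Derive X u0) + Derive W (X u0) * Derive (Derive X) u0)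
      with (scal (Derive X u0) (Derive (Derive W) (X u0)) * Derive X u0 + Derive W (X u0) * Derive (Derive X) u0).
    exact C2.
    unfold scal; simpl; unfold mult; simpl. ring.
Qed.


Lemma pl a b c d : 0 <= a -> 0 <= b -> a < c -> b < d -> a * b < c * d.
Proof. intros; nra. Qed.
Lemma ple a b c d : 0 <= a -> 0 <= b -> a <= c -> b <= d -> a * b <= c * d.
Proof. intros; nra. Qed.

Lemma abs3 a b c : Rabs (a + b + c) <= Rabs a + Rabs b + Rabs c.
Proof.
  eapply Rle_trans. apply Rabs_triang. pose proof (Rabs_triang a b). lra.
Qed.

Lemma alg (lam il xi C0 Dl M y1 z1 y2 z2 pxx pxy pxz pyy pyz pzy pzz Qx Qy Qz Y1 Z1 Y2 Z2 : R) :
  1.618 < lam < 1.6181 -> 0.618 < il < 0.6181 ->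
  0 < xi -> 0 < C0 -> xi * (1 + C0 + /4) < 0.01 -> 0 < Dl < /4 -> 0 < M ->
  Rabs y1 < C0 -> Rabs z1 < Dl -> Rabs Y1 < C0 -> Rabs Z1 < Dl ->
  Rabs (pxx + 1) < xi -> Rabs pxy < xi -> Rabs pxz < xi ->
  Rabs (pyy - il) < xi -> Rabs pyz < xi -> Rabs pzy < xi -> Rabs (pzz - lam) < xi ->
  Rabs Qx <= M * (1 + C0 + /4) ^ 2 -> Rabs Qy <= M * (1 + C0 + /4) ^ 2 ->
  Rabs Qz <= M * (1 + C0 + /4) ^ 2 ->
  (lam - xi - 1) / 4 * Rabs z2 > 3 * M * (1 + C0 + /4) ^ 2 ->
  (lam - xi - 1) / 4 * Rabs z2 > xi * Rabs y2 ->
  Z2 * ((pxx + pxy * y1 + pxz * z1) * (pxx + pxy * y1 + pxz * z1)) + Z1 * (Qx + pxy * y2 + pxz * z2)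
    = Qz + pzy * y2 + pzz * z2 ->
  Y2 * ((pxx + pxy * y1 + pxz * z1) * (pxx + pxy * y1 + pxz * z1)) + Y1 * (Qx + pxy * y2 + pxz * z2)
    = Qy + pyy * y2 + pyz * z2 ->
  Rabs Z2 > Rabs z2 /\
  (lam - xi - 1) / 4 * Rabs Z2 > 3 * M * (1 + C0 + /4) ^ 2 /\
  (lam - xi - 1) / 4 * Rabs Z2 > xi * Rabs Y2.
Proof.
  intros Hlam Hil Hxi HC0 He HDl HM Hy1 Hz1 HY1 HZ1 Axx Axy Axz Ayy Ayz Azy Azz HQx HQy HQz Hk1 Hk2 EZ EY.
  set (C := 1 + C0 + /4) in *.
  set (q := M * C ^ 2) in *.
  set (k := (lam - xi - 1) / 4) in *.
  set (A := Rabs z2) in *. set (B := Rabs y2) in *.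
  set (X1 := pxx + pxy * y1 + pxz * z1) in *.
  set (X2 := Qx + pxy * y2 + pxz * z2) in *.
  assert (E3 : 3 * M * C ^ 2 = 3 * q) by (unfold q; ring).
  rewrite E3 in Hk1 |- *.
  assert (HA0 : 0 <= A) by apply Rabs_pos.
  assert (HB0 : 0 <= B) by apply Rabs_pos.
  assert (Hq0 : 0 < q) by (unfold q; apply Rmult_lt_0_compat; auto; apply pow_lt; unfold C; lra).
  assert (Hxs : xi < 0.01) by (unfold C in *; nra).
  assert (Hk : 0.152 < k < 0.155) by (unfold k; lra).
  assert (HA : 0 < A) by nra.
  assert (HX1 : Rabs (X1 + 1) < xi * C).
  { replace (X1 + 1) with ((pxx + 1) + pxy * y1 + pxz * z1) by (unfold X1; ring).
    eapply Rle_lt_trans. apply abs3. rewrite !Rabs_mult.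
    pose proof (pl _ _ _ _ (Rabs_pos pxy) (Rabs_pos y1) Axy Hy1).
    pose proof (pl _ _ _ _ (Rabs_pos pxz) (Rabs_pos z1) Axz Hz1).
    unfold C. nra. }
  assert (HX1b : 0.98 < X1 * X1 < 1.0201).
  { apply Rabs_def2 in HX1. unfold C in *. split; nra. }
  assert (XX : Rabs X1 * Rabs X1 = X1 * X1) by (rewrite <- Rabs_mult; apply Rabs_right; nra).
  assert (HX2 : Rabs X2 <= q + xi * B + xi * A).
  { unfold X2. eapply Rle_trans. apply abs3. rewrite !Rabs_mult.
    pose proof (ple _ _ _ _ (Rabs_pos pxy) (Rabs_pos y2) (Rlt_le _ _ Axy) (Rle_refl B)).
    pose proof (ple _ _ _ _ (Rabs_pos pxz) (Rabs_pos z2) (Rlt_le _ _ Axz) (Rle_refl A)).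
    unfold A, B in *. lra. }
  assert (HRz : Rabs (Qz + pzy * y2 + pzz * z2) >= (lam - xi) * A - xi * B - q).
  { assert (Rabs pzz >= lam - xi).
    { pose proof (Rabs_triang_inv lam (lam - pzz)). rewrite Rabs_minus_sym in Azz.
      replace (lam - (lam - pzz)) with pzz in H by ring. rewrite Rabs_right in H by lra. lra. }
    pose proof (Rabs_triang_inv (pzz * z2) (Qz + pzy * y2)).
    pose proof (Rabs_triang Qz (pzy * y2)).
    rewrite !Rabs_mult in *.
    pose proof (ple _ _ _ _ (Rabs_pos pzy) (Rabs_pos y2) (Rlt_le _ _ Azy) (Rle_refl B)).
    assert (Rabs pzz * A >= (lam - xi) * A) by nra.
    replace (Qz + pzy * y2 + pzz * z2) with (pzz * z2 - - (Qz + pzy * y2)) by ring.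
    pose proof (Rabs_triang_inv (pzz * z2) (- (Qz + pzy * y2))).
    rewrite Rabs_Ropp in H4. rewrite Rabs_mult in H4. unfold A, B in *. lra. }
  rewrite <- EZ in HRz.
  assert (HZ2a : Rabs Z2 * (X1 * X1) >= (lam - xi) * A - xi * B - q - / 4 * (q + xi * B + xi * A)).
  { pose proof (Rabs_triang (Z2 * (X1 * X1)) (Z1 * X2)).
    rewrite !Rabs_mult in H. rewrite XX in H.
    pose proof (ple _ _ _ _ (Rabs_pos Z1) (Rabs_pos X2) (Rlt_le _ _ (Rlt_trans _ _ _ HZ1 (proj2 HDl))) HX2).
    lra. }
  assert (HZ2b : Rabs Z2 * (X1 * X1) >= 1.35 * A).
  { assert (kA : k * A = (lam * A - xi * A - A) / 4) by (unfold k; field).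
    assert (lam * A >= 1.618 * A) by nra.
    assert (xi * A <= 0.01 * A) by nra.
    assert (xi * B < k * A) by lra.
    assert (q < k * A / 3) by lra.
    rewrite Rmult_minus_distr_r in HZ2a. lra. }
  assert (HZ2 : Rabs Z2 > 1.3 * A).
  { pose proof (Rabs_pos Z2). nra. }
  split; [lra|]. split; [nra|].
  assert (HRy : Rabs (Qy + pyy * y2 + pyz * z2) <= (il + xi) * B + xi * A + q).
  { eapply Rle_trans. apply abs3. rewrite !Rabs_mult.
    assert (Rabs pyy <= il + xi).
    { pose proof (Rabs_triang (pyy - il) il). replace (pyy - il + il) with pyy in H by ring.
      rewrite (Rabs_right il) in H by lra. lra. }
    pose proof (ple _ _ _ _ (Rabs_pos pyy) (Rabs_pos y2) H (Rle_refl B)).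
    pose proof (ple _ _ _ _ (Rabs_pos pyz) (Rabs_pos z2) (Rlt_le _ _ Ayz) (Rle_refl A)).
    unfold A, B in *. lra. }
  rewrite <- EY in HRy.
  assert (HY2a : Rabs Y2 * (X1 * X1) <= (il + xi) * B + xi * A + q + C0 * (q + xi * B + xi * A)).
  { pose proof (Rabs_triang_inv (Y2 * (X1 * X1)) (- (Y1 * X2))).
    replace (Y2 * (X1 * X1) - - (Y1 * X2)) with (Y2 * (X1 * X1) + Y1 * X2) in H by ring.
    rewrite Rabs_Ropp, !Rabs_mult in H. rewrite XX in H.
    pose proof (ple _ _ _ _ (Rabs_pos Y1) (Rabs_pos X2) (Rlt_le _ _ HY1) HX2).
    lra. }
  assert (HY2b : xi * (Rabs Y2 * (X1 * X1)) <= 0.66 * k * A).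
  { assert (H1 : xi * B < k * A) by lra.
    assert (H2 : xi * (1 + C0) < 0.01) by (unfold C in *; lra).
    assert (H3 : xi * C0 < 0.01) by lra.
    apply Rle_trans with (xi * ((il + xi) * B + xi * A + q + C0 * (q + xi * B + xi * A))).
    { apply Rmult_le_compat_l; lra. }
    assert (HxB : 0 <= xi * B) by (apply Rmult_le_pos; lra).
    assert (HxA : 0 <= xi * A) by (apply Rmult_le_pos; lra).
    assert (Hp : 0 <= xi * (1 + C0)) by (apply Rmult_le_pos; lra).
    assert (G1 : il * (xi * B) <= 0.6181 * (k * A)) by (apply ple; lra).
    assert (G2 : (xi * (1 + C0)) * (xi * B) <= 0.01 * (k * A)) by (apply ple; lra).
    assert (G3 : xi * A <= 0.07 * (k * A)).
    { replace (0.07 * (k * A)) with ((0.07 * k) * A) by ring. apply Rmult_le_compat_r; lra. }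
    assert (G4 : (xi * (1 + C0)) * (xi * A) <= 0.01 * (0.07 * (k * A))) by (apply ple; lra).
    assert (G5 : (xi * (1 + C0)) * q <= 0.01 * (k * A / 3)) by (apply ple; lra).
    replace (xi * ((il + xi) * B + xi * A + q + C0 * (q + xi * B + xi * A))) with
      (il * (xi * B) + (xi * (1 + C0)) * (xi * B) + (xi * (1 + C0)) * (xi * A) + (xi * (1 + C0)) * q) by ring.
    lra. }
  assert (HY3 : xi * Rabs Y2 < 0.68 * (k * A)).
  { assert (0 <= xi * Rabs Y2) by (apply Rmult_le_pos; [lra|apply Rabs_pos]).
    assert (0.98 * (xi * Rabs Y2) <= 0.66 * k * A).
    { eapply Rle_trans; [|exact HY2b]. replace (xi * (Rabs Y2 * (X1 * X1))) with ((xi * Rabs Y2) * (X1 * X1)) by ring.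
      rewrite (Rmult_comm (xi * Rabs Y2) (X1 * X1)). apply Rmult_le_compat_r; lra. }
    assert (0 < k * A) by (apply Rmult_lt_0_compat; lra).
    lra. }
  assert (k * A < k * Rabs Z2) by (apply Rmult_lt_compat_l; lra).
  assert (0 < k * A) by (apply Rmult_lt_0_compat; lra).
  lra.
Qed.

Lemma lam_bounds : 1.618 < lam < 1.6181 /\ 0.618 < / lam < 0.6181.
Proof.
  assert (S1 : 2.236 < sqrt 5).
  { rewrite <- (sqrt_square 2.236) by lra. apply sqrt_lt_1; lra. }
  assert (S2 : sqrt 5 < 2.2362).
  { rewrite <- (sqrt_square 2.2362) by lra. apply sqrt_lt_1; lra. }
  assert (L : 1.618 < lam < 1.6181) by (unfold lam; lra).
  split; auto. split.
  - apply (Rmult_lt_reg_l lam); [lra|]. rewrite Rinv_r by lra. nra.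
  - apply (Rmult_lt_reg_l lam); [lra|]. rewrite Rinv_r by lra. nra.
Qed.

Lemma abs_le_norm3 x y z : Rabs x <= norm3 x y z.
Proof.
  unfold norm3. rewrite <- sqrt_Rsqr_abs. apply sqrt_le_1_alt.
  unfold Rsqr. simpl. nra.
Qed.

Lemma Qb (h : ax -> ax -> R) M C0 y1 z1 : 0 <= M -> 0 <= C0 ->
  (forall a b, Rabs (h a b) <= M) -> Rabs y1 <= C0 -> Rabs z1 <= / 4 ->
  Rabs ((h AX AX + h AY AX * y1 + h AZ AX * z1)
        + (h AX AY + h AY AY * y1 + h AZ AY * z1) * y1
        + (h AX AZ + h AY AZ * y1 + h AZ AZ * z1) * z1) <= M * (1 + C0 + / 4) ^ 2.
Proof.
  intros HM HC0 Hh Hy Hz.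
  assert (Sb : forall b, Rabs (h AX b + h AY b * y1 + h AZ b * z1) <= M * (1 + C0 + / 4)).
  { intros b. eapply Rle_trans. apply abs3. rewrite !Rabs_mult.
    pose proof (Hh AX b); pose proof (Hh AY b); pose proof (Hh AZ b).
    pose proof (ple _ _ _ _ (Rabs_pos (h AY b)) (Rabs_pos y1) H0 Hy).
    pose proof (ple _ _ _ _ (Rabs_pos (h AZ b)) (Rabs_pos z1) H1 Hz).
    lra. }
  eapply Rle_trans. apply abs3. rewrite !Rabs_mult.
  pose proof (Sb AX); pose proof (Sb AY); pose proof (Sb AZ).
  pose proof (ple _ _ _ _ (Rabs_pos _) (Rabs_pos y1) H0 Hy).
  pose proof (ple _ _ _ _ (Rabs_pos _) (Rabs_pos z1) H1 Hz).
  replace ((1 + C0 + / 4) ^ 2) with ((1 + C0 + / 4) * (1 + C0 + / 4)) by ring. nra.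
Qed.

Lemma abs_le_norm3y x y z : Rabs y <= norm3 x y z.
Proof.
  unfold norm3. rewrite <- sqrt_Rsqr_abs. apply sqrt_le_1_alt.
  unfold Rsqr. simpl. nra.
Qed.
Lemma abs_le_norm3z x y z : Rabs z <= norm3 x y z.
Proof.
  unfold norm3. rewrite <- sqrt_Rsqr_abs. apply sqrt_le_1_alt.
  unfold Rsqr. simpl. nra.
Qed.

Definition gc (G : pt -> pt) (a : ax) : pt -> R := fun q => coord a (G q).

Lemma hess_abs M G al P : hess_bound M G -> forall a b,
  Rabs (pderiv a (pderiv b (gc G al)) P) <= M.
Proof.
  intros H a b. specialize (H al b P). simpl in H. unfold gc.
  destruct a.
  - pose proof (abs_le_norm3 (pderiv AX (pderiv b (fun q => coord al (G q))) P)
      (pderiv AY (pderiv b (fun q => coord al (G q))) P) (pderiv AZ (pderiv b (fun q => coord al (G q))) P)). lra.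
  - pose proof (abs_le_norm3y (pderiv AX (pderiv b (fun q => coord al (G q))) P)
      (pderiv AY (pderiv b (fun q => coord al (G q))) P) (pderiv AZ (pderiv b (fun q => coord al (G q))) P)). lra.
  - pose proof (abs_le_norm3z (pderiv AX (pderiv b (fun q => coord al (G q))) P)
      (pderiv AY (pderiv b (fun q => coord al (G q))) P) (pderiv AZ (pderiv b (fun q => coord al (G q))) P)). lra.
Qed.

Lemma close_entry xi G P a b : C1_close xi G ->
  Rabs (pderiv b (gc G a) P - DG0_entry a b) < xi.
Proof. intros H. exact (proj2 (H P) a b). Qed.


Definition Sfull (h : ax -> ax -> R) b c y1 z1 y2 z2 :=
  (h AX AX + h AY AX * y1 + h AZ AX * z1) +
  ((h AX AY + h AY AY * y1 + h AZ AY * z1) * y1 + b * y2) +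
  ((h AX AZ + h AY AZ * y1 + h AZ AZ * z1) * z1 + c * z2).
Definition Qf (h : ax -> ax -> R) y1 z1 :=
  (h AX AX + h AY AX * y1 + h AZ AX * z1)
  + (h AX AY + h AY AY * y1 + h AZ AY * z1) * y1
  + (h AX AZ + h AY AZ * y1 + h AZ AZ * z1) * z1.

Lemma eqh (W2 W1 a b c y1 z1 y2 z2 bz cz : R) (hx hz : ax -> ax -> R) :
  W2 * ((a + b * y1 + c * z1) * (a + b * y1 + c * z1)) + W1 * Sfull hx b c y1 z1 y2 z2
   = Sfull hz bz cz y1 z1 y2 z2 ->
  W2 * ((a + b * y1 + c * z1) * (a + b * y1 + c * z1)) + W1 * (Qf hx y1 z1 + b * y2 + c * z2)
   = Qf hz y1 z1 + bz * y2 + cz * z2.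
Proof.
  intros H. assert (E : Qf hz y1 z1 + bz * y2 + cz * z2 = Sfull hz bz cz y1 z1 y2 z2)
    by (unfold Sfull, Qf; ring).
  rewrite E, <- H. unfold Sfull, Qf. ring.
Qed.

Lemma step G xi Delta M C0 (y z Yn Zn : R -> R) u0 d :
  (forall a, Cpd (gc G a)) -> hess_bound M G -> C1_close xi G ->
  0 < xi -> 0 < C0 -> xi * (1 + C0 + /4) < 0.01 -> 0 < Delta < /4 -> 0 < M -> 0 < d ->
  (forall u, Rabs (u - u0) < d -> ex_derive y u /\ ex_derive z u /\
      curve Yn Zn (coord AX (G (curve y z u))) = G (curve y z u) /\
      ex_derive Yn (coord AX (G (curve y z u))) /\ ex_derive Zn (coord AX (G (curve y z u)))) ->
  ex_derive (Derive y) u0 -> ex_derive (Derive z) u0 ->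
  ex_derive (Derive Yn) (coord AX (G (curve y z u0))) -> ex_derive (Derive Zn) (coord AX (G (curve y z u0))) ->
  Rabs (Derive y u0) < C0 -> Rabs (Derive z u0) < Delta ->
  Rabs (Derive Yn (coord AX (G (curve y z u0)))) < C0 ->
  Rabs (Derive Zn (coord AX (G (curve y z u0)))) < Delta ->
  (lam - xi - 1) / 4 * Rabs (D2 z u0) > 3 * M * (1 + C0 + /4) ^ 2 ->
  (lam - xi - 1) / 4 * Rabs (D2 z u0) > xi * Rabs (D2 y u0) ->
  Rabs (D2 Zn (coord AX (G (curve y z u0)))) > Rabs (D2 z u0) /\
  (lam - xi - 1) / 4 * Rabs (D2 Zn (coord AX (G (curve y z u0)))) > 3 * M * (1 + C0 + /4) ^ 2 /\
  (lam - xi - 1) / 4 * Rabs (D2 Zn (coord AX (G (curve y z u0)))) > xi * Rabs (D2 Yn (coord AX (G (curve y z u0)))).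
Proof.
  intros HG Hh Hc Hxi HC0 He HD HM Hd Hloc Hy2 Hz2 HY2 HZ2 By Bz BY BZ I1 I2.
  set (X := fun u => gc G AX (u, y u, z u)).
  set (Zf := fun u => gc G AZ (u, y u, z u)).
  set (Yf := fun u => gc G AY (u, y u, z u)).
  set (P := (u0, y u0, z u0)).
  change (coord AX (G (curve y z u0))) with (X u0) in *.
  assert (Hloc' : forall u, Rabs (u - u0) < d -> ex_derive y u /\ ex_derive z u) by (intros u Hu; destruct (Hloc u Hu) as [? [? _]]; auto).
  destruct (Hloc u0) as [Hy1 [Hz1 _]]. { rewrite Rminus_diag, Rabs_R0; auto. }
  pose proof (chain1 _ y z u0 (HG AX) Hy1 Hz1) as DX1.
  pose proof (chain2 _ y z u0 d (HG AX) Hd Hloc' Hy2 Hz2) as DX2.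
  pose proof (chain2 _ y z u0 d (HG AZ) Hd Hloc' Hy2 Hz2) as DZ2.
  pose proof (chain2 _ y z u0 d (HG AY) Hd Hloc' Hy2 Hz2) as DY2.
  assert (Hrep : forall W : R -> R, (forall u, gc G AX (u, y u, z u) = gc G AX (u, y u, z u)) -> True) by auto.
  assert (HX : forall u, Rabs (u - u0) < d -> ex_derive X u).
  { intros u Hu. destruct (Hloc u Hu) as [Hyu [Hzu _]]. eexists. exact (chain1 _ y z u (HG AX) Hyu Hzu). }
  assert (HX2 : ex_derive (Derive X) u0) by (eexists; exact DX2).
  assert (RZ := reparam X Zf Zn u0 d Hd).
  assert (RY := reparam X Yf Yn u0 d Hd).
  assert (EZ : Derive (Derive Zn) (X u0) * (Derive X u0 * Derive X u0) + Derive Zn (X u0) * Derive (Derive X) u0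
     = Derive (Derive Zf) u0).
  { apply RZ; auto. intros u Hu. destruct (Hloc u Hu) as [_ [_ [E [_ HZu]]]].
    split; [exact (f_equal (coord AZ) E)|]. split; auto. }
  assert (EY : Derive (Derive Yn) (X u0) * (Derive X u0 * Derive X u0) + Derive Yn (X u0) * Derive (Derive X) u0
     = Derive (Derive Yf) u0).
  { apply RY; auto. intros u Hu. destruct (Hloc u Hu) as [_ [_ [E [HYu _]]]].
    split; [exact (f_equal (coord AY) E)|]. split; auto. }
  match type of DX1 with is_derive _ _ ?v => assert (eX1 : Derive X u0 = v) by exact (is_derive_unique _ _ _ DX1) end.
  match type of DX2 with is_derive _ _ ?v => assert (eX2 : Derive (Derive X) u0 = v) by exact (is_derive_unique _ _ _ DX2) end.
  match type of DZ2 with is_derive _ _ ?v => assert (eZ2 : Derive (Derive Zf) u0 = v) by exact (is_derive_unique _ _ _ DZ2) end.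
  match type of DY2 with is_derive _ _ ?v => assert (eY2 : Derive (Derive Yf) u0 = v) by exact (is_derive_unique _ _ _ DY2) end.
  rewrite eX1, eX2 in EZ, EY. rewrite eZ2 in EZ. rewrite eY2 in EY.
  destruct lam_bounds as [Lb ILb].
  pose proof (hess_abs M G AX P Hh) as HhX.
  pose proof (hess_abs M G AY P Hh) as HhY.
  pose proof (hess_abs M G AZ P Hh) as HhZ.
  pose proof (Qb _ M C0 (Derive y u0) (Derive z u0) (Rlt_le _ _ HM) (Rlt_le _ _ HC0) HhX ltac:(lra) ltac:(lra)) as QX.
  pose proof (Qb _ M C0 (Derive y u0) (Derive z u0) (Rlt_le _ _ HM) (Rlt_le _ _ HC0) HhY ltac:(lra) ltac:(lra)) as QY.
  pose proof (Qb _ M C0 (Derive y u0) (Derive z u0) (Rlt_le _ _ HM) (Rlt_le _ _ HC0) HhZ ltac:(lra) ltac:(lra)) as QZ.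
  pose proof (close_entry xi G P AX AX Hc) as Cxx.
  pose proof (close_entry xi G P AX AY Hc) as Cxy.
  pose proof (close_entry xi G P AX AZ Hc) as Cxz.
  pose proof (close_entry xi G P AY AY Hc) as Cyy.
  pose proof (close_entry xi G P AY AZ Hc) as Cyz.
  pose proof (close_entry xi G P AZ AY Hc) as Czy.
  pose proof (close_entry xi G P AZ AZ Hc) as Czz.
  simpl DG0_entry in Cxx, Cxy, Cxz, Cyy, Cyz, Czy, Czz.
  rewrite Rminus_0_r in Cxy, Cxz, Cyz, Czy.
  replace (pderiv AX (gc G AX) P - -1) with (pderiv AX (gc G AX) P + 1) in Cxx by ring.
  unfold D2 in *.
  refine (alg lam (/ lam) xi C0 Delta M (Derive y u0) (Derive z u0) (Derive (Derive y) u0) (Derive (Derive z) u0)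
    _ _ _ _ _ _ _ _ _ _ _ _ _ _ Lb ILb Hxi HC0 He HD HM By Bz BY BZ Cxx Cxy Cxz Cyy Cyz Czy Czz QX QY QZ I1 I2 _ _).
  - exact (eqh (Derive (Derive Zn) (X u0)) (Derive Zn (X u0)) (pderiv AX (gc G AX) P) (pderiv AY (gc G AX) P)
      (pderiv AZ (gc G AX) P) (Derive y u0) (Derive z u0) (Derive (Derive y) u0) (Derive (Derive z) u0)
      (pderiv AY (gc G AZ) P) (pderiv AZ (gc G AZ) P)
      (fun a b => pderiv a (pderiv b (gc G AX)) P) (fun a b => pderiv a (pderiv b (gc G AZ)) P) EZ).
  - exact (eqh (Derive (Derive Yn) (X u0)) (Derive Yn (X u0)) (pderiv AX (gc G AX) P) (pderiv AY (gc G AX) P)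
      (pderiv AZ (gc G AX) P) (Derive y u0) (Derive z u0) (Derive (Derive y) u0) (Derive (Derive z) u0)
      (pderiv AY (gc G AY) P) (pderiv AZ (gc G AY) P)
      (fun a b => pderiv a (pderiv b (gc G AX)) P) (fun a b => pderiv a (pderiv b (gc G AY)) P) EY).
Qed.

Lemma cont_of_ex g t : ex_derive g t -> continuity_pt g t.
Proof. intros H. apply continuity_pt_filterlim. exact (ex_derive_continuous g t H). Qed.

Lemma ex_minus_c f v t : ex_derive f t -> ex_derive (fun x => f x - v) t.
Proof. intros H. exact (ex_derive_minus f (fun _ => v) t H (ex_derive_const v t)). Qed.
Lemma ex_c_minus f v t : ex_derive f t -> ex_derive (fun x => v - f x) t.
Proof. intros H. exact (ex_derive_minus (fun _ => v) f t (ex_derive_const v t) H). Qed.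

Lemma loc_surj f a b t0 : a < t0 < b -> (forall t, a < t < b -> ex_derive f t) -> Derive f t0 <> 0 ->
  exists d, 0 < d /\ forall v, Rabs (v - f t0) < d -> exists t, a < t < b /\ v = f t.
Proof.
  intros Ht0 Hf HL.
  set (L := Derive f t0) in *.
  assert (HLp : 0 < Rabs L) by (apply Rabs_pos_lt; auto).
  pose proof (proj1 (is_derive_Reals _ _ _) (Derive_correct _ _ (Hf t0 Ht0))) as DL.
  destruct (DL (Rabs L / 2) ltac:(lra)) as [del Hdel].
  pose proof (cond_pos del).
  set (h0 := Rmin (del / 2) (Rmin ((t0 - a) / 2) ((b - t0) / 2))).
  assert (Hh0 : 0 < h0) by (unfold h0; repeat apply Rmin_pos; lra).
  assert (h1 : h0 <= del / 2) by apply Rmin_l.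
  assert (h2 : h0 <= (t0 - a) / 2) by (unfold h0; pose proof (Rmin_r (del/2) (Rmin ((t0 - a) / 2) ((b - t0) / 2))); pose proof (Rmin_l ((t0 - a) / 2) ((b - t0) / 2)); lra).
  assert (h3 : h0 <= (b - t0) / 2) by (unfold h0; pose proof (Rmin_r (del/2) (Rmin ((t0 - a) / 2) ((b - t0) / 2))); pose proof (Rmin_r ((t0 - a) / 2) ((b - t0) / 2)); lra).
  assert (Qp := Hdel h0 ltac:(lra) ltac:(rewrite Rabs_right; lra)).
  assert (Qm := Hdel (- h0) ltac:(lra) ltac:(rewrite Rabs_Ropp, Rabs_right; lra)).
  change (Derive f t0) with L in Qp, Qm.
  set (qp := (f (t0 + h0) - f t0) / h0) in Qp.
  set (qm := (f (t0 + - h0) - f t0) / - h0) in Qm.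
  assert (Ep : f (t0 + h0) - f t0 = qp * h0) by (unfold qp; field; lra).
  assert (Em : f (t0 + - h0) - f t0 = - (qm * h0)) by (unfold qm; field; lra).
  exists (Rabs L * h0 / 2). split. { apply Rmult_lt_0_compat; [|lra]. apply Rmult_lt_0_compat; lra. }
  intros v Hv.
  assert (Hcont : forall (g : R -> R), (forall t, a < t < b -> ex_derive g t) ->
      forall s, t0 + - h0 <= s <= t0 + h0 -> continuity_pt g s).
  { intros g Hg s Hs. apply cont_of_ex. apply Hg. lra. }
  apply Rabs_def2 in Hv.
  destruct (Rlt_or_le 0 L) as [Lpos | Lneg].
  - rewrite (Rabs_right L) in * by lra. cbv beta.
    apply Rabs_def2 in Qp. apply Rabs_def2 in Qm.
    destruct (Ranalysis5.IVT_interv (fun t => f t - v) (t0 + - h0) (t0 + h0)) as [t [Ht Et]].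
    + apply Hcont. intros t Ht. apply ex_minus_c. apply Hf; auto.
    + lra.
    + assert (qm * h0 > L / 2 * h0) by nra. lra.
    + assert (qp * h0 > L / 2 * h0) by nra. lra.
    + exists t. split; [lra|]. lra.
  - assert (Lneg' : L < 0) by (destruct Lneg; auto; lra).
    rewrite (Rabs_left L) in * by lra. cbv beta.
    apply Rabs_def2 in Qp. apply Rabs_def2 in Qm.
    destruct (Ranalysis5.IVT_interv (fun t => v - f t) (t0 + - h0) (t0 + h0)) as [t [Ht Et]].
    + apply Hcont. intros t Ht. apply ex_c_minus. apply Hf; auto.
    + lra.
    + assert (qm * h0 < L / 2 * h0) by nra. lra.
    + assert (qp * h0 < L / 2 * h0) by nra. lra.
    + exists t. split; [lra|]. lra.
Qed.

Definition Inv (xi M C0 : R) (f g : R -> R) (u : R) :=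
  (lam - xi - 1) / 4 * Rabs (D2 f u) > 3 * M * (1 + C0 + / 4) ^ 2 /\
  (lam - xi - 1) / 4 * Rabs (D2 f u) > xi * Rabs (D2 g u).

Theorem lemma2p7 :
  forall C0 : R, 0 < C0 ->
  exists xi0 : R, 0 < xi0 /\
  forall (xi Delta : R), 0 < xi < xi0 -> 0 < Delta < Delta0 ->
  forall M : R, 0 < M ->
  forall G : pt -> pt,
    C2diffeo G -> hess_bound M G -> C1_close xi G ->
  forall (a b : R) (gy gz : nat -> R -> R) (m : nat),
    let C := 1 + C0 + Delta0 in
    let xn := fun (n : nat) (t : R) => coord AX (Nat.iter n G (curve (gy 0%nat) (gz 0%nat) t)) in
    let J := fun (n : nat) (s : R) => exists t, a < t < b /\ s = xn n t in
    (* hypotheses on gamma *)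
    (forall t, a < t < b ->
       C2_at (gy 0%nat) t /\ C2_at (gz 0%nat) t /\
       norm3 1 (Derive (gy 0%nat) t) (Derive (gz 0%nat) t) < C /\
       (lam - xi - 1) / 4 * Rabs (D2 (gz 0%nat) t) > 3 * M * C ^ 2 /\
       (lam - xi - 1) / 4 * Rabs (D2 (gz 0%nat) t) > xi * Rabs (D2 (gy 0%nat) t) /\
       Rabs (Derive (gy 0%nat) t) < C0 /\
       Rabs (Derive (gz 0%nat) t) < Delta) ->
    (* hypotheses on the iterates gamma^(n), n = 1..m *)
    (forall n : nat, (1 <= n <= m)%nat ->
       (forall t, a < t < b ->
          ex_derive (xn n) t /\ Derive (xn n) t <> 0 /\
          Nat.iter n G (curve (gy 0%nat) (gz 0%nat) t) = curve (gy n) (gz n) (xn n t)) /\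
       (forall s, J n s ->
          C2_at (gy n) s /\ C2_at (gz n) s /\
          Rabs (Derive (gy n) s) < C0 /\ Rabs (Derive (gz n) s) < Delta)) ->
    (* conclusion *)
    forall n : nat, (1 <= n /\ n + 1 <= m)%nat ->
    forall tt ss : R, J (n - 1)%nat tt -> J n ss ->
      curve (gy n) (gz n) ss = G (curve (gy (n - 1)%nat) (gz (n - 1)%nat) tt) ->
      Rabs (D2 (gz n) ss) > Rabs (D2 (gz (n - 1)%nat) tt).
Proof.
  intros C0 HC0.
  exists (0.01 / (1 + C0 + /4)). split. { apply Rdiv_lt_0_compat; lra. }
  intros xi Delta Hxi HD M HM G HGd Hh Hc a b gy gz m C xn J H0 Hn n Hnm tt ss Htt Hss Heq.
  assert (He : xi * (1 + C0 + /4) < 0.01).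
  { destruct Hxi as [_ H1]. apply (Rmult_lt_compat_r (1+C0+/4)) in H1; [|lra].
    unfold Rdiv in H1. rewrite Rmult_assoc, Rinv_l in H1 by lra. lra. }
  assert (HD' : 0 < Delta < /4) by (unfold Delta0 in HD; lra).
  assert (HG : forall al, Cpd (gc G al)).
  { intros al. apply C2fun_Cpd. exact (proj1 HGd al). }
  assert (Lv : forall k u, (k <= m)%nat -> J k u -> C2_at (gy k) u /\ C2_at (gz k) u /\
     Rabs (Derive (gy k) u) < C0 /\ Rabs (Derive (gz k) u) < Delta).
  { intros k u Hk [t [Ht Eu]]. destruct k as [|k].
    - change (u = t) in Eu. subst u. destruct (H0 t Ht) as [A1 [A2 [_ [_ [_ [A3 A4]]]]]]. auto.
    - apply (proj2 (Hn (S k) ltac:(lia))). exists t; auto. }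
  assert (Rel : forall k t, (k <= m)%nat -> a < t < b ->
     curve (gy k) (gz k) (xn k t) = Nat.iter k G (curve (gy 0%nat) (gz 0%nat) t)).
  { intros k t Hk Ht. destruct k as [|k]. reflexivity. symmetry. exact (proj2 (proj2 (proj1 (Hn (S k) ltac:(lia)) t Ht))). }
  assert (Nb : forall k u, (k <= m)%nat -> J k u -> exists d, 0 < d /\ forall v, Rabs (v - u) < d -> J k v).
  { intros k u Hk [t [Ht Eu]]. destruct k as [|k].
    - change (u = t) in Eu. subst u. exists (Rmin (t - a) (b - t)). split. apply Rmin_pos; lra.
      intros v Hv. exists v. split; [|reflexivity].
      pose proof (Rmin_l (t - a) (b - t)). pose proof (Rmin_r (t - a) (b - t)).
      apply Rabs_def2 in Hv. lra.
    - destruct (Hn (S k) ltac:(lia)) as [H1 _].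
      destruct (loc_surj (xn (S k)) a b t Ht (fun t' Ht' => proj1 (H1 t' Ht')) (proj1 (proj2 (H1 t Ht)))) as [d [Hd Hs]].
      exists d. split; auto. intros v Hv. subst u. destruct (Hs v Hv) as [t' [? ?]]. exists t'; auto. }
  assert (St : forall k u, (k + 1 <= m)%nat -> J k u -> Inv xi M C0 (gz k) (gy k) u ->
     Rabs (D2 (gz (S k)) (coord AX (G (curve (gy k) (gz k) u)))) > Rabs (D2 (gz k) u) /\
     Inv xi M C0 (gz (S k)) (gy (S k)) (coord AX (G (curve (gy k) (gz k) u)))).
  { intros k u Hk Ju [I1 I2].
    destruct (Nb k u ltac:(lia) Ju) as [d [Hd Hdv]].
    destruct (Lv k u ltac:(lia) Ju) as [[_ [Ly2 _]] [[_ [Lz2 _]] [By Bz]]].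
    assert (JX : forall v, J k v -> J (S k) (coord AX (G (curve (gy k) (gz k) v)))).
    { intros v [t [Ht Ev]]. exists t. split; auto. subst v. rewrite (Rel k t) by (auto; lia). reflexivity. }
    destruct (Lv (S k) _ ltac:(lia) (JX u Ju)) as [[_ [LY2 _]] [[_ [LZ2 _]] [BY BZ]]].
    destruct (step G xi Delta M C0 (gy k) (gz k) (gy (S k)) (gz (S k)) u d HG Hh Hc (proj1 Hxi) HC0 He HD' HM Hd)
      as [R1 [R2 R3]]; auto.
    - intros v Hv. pose proof (Hdv v Hv) as Jv.
      destruct (Lv k v ltac:(lia) Jv) as [[Ey _] [[Ez _] _]].
      destruct (Lv (S k) _ ltac:(lia) (JX v Jv)) as [[EY _] [[EZ _] _]].
      split; auto. split; auto. split; auto.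
      destruct Jv as [t [Ht Ev]]. subst v. rewrite (Rel k t) by (auto; lia).
      change (G (Nat.iter k G (curve (gy 0%nat) (gz 0%nat) t))) with (Nat.iter (S k) G (curve (gy 0%nat) (gz 0%nat) t)).
      rewrite <- (Rel (S k) t) by (auto; lia). reflexivity.
    - split; auto. split; auto. }
  destruct n as [|n']; [lia|].
  replace (S n' - 1)%nat with n' in * by lia.
  assert (IndI : forall j t, (j <= n')%nat -> a < t < b -> Inv xi M C0 (gz j) (gy j) (xn j t)).
  { induction j as [|j IH]; intros t Hj Ht.
    - destruct (H0 t Ht) as [_ [_ [_ [A1 [A2 _]]]]]. split; [exact A1|exact A2].
    - destruct (St j (xn j t) ltac:(lia) ltac:(exists t; auto) (IH t ltac:(lia) Ht)) as [_ R].
      rewrite (Rel j t) in R by (auto; lia). exact R. }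
  destruct Htt as [t0 [Ht0 Et0]].
  assert (Itt : Inv xi M C0 (gz n') (gy n') tt) by (subst tt; apply IndI; auto).
  destruct (St n' tt ltac:(lia) ltac:(exists t0; auto) Itt) as [R _].
  assert (Ess : ss = coord AX (G (curve (gy n') (gz n') tt))) by (rewrite <- Heq; reflexivity).
  rewrite Ess. exact R.
Qed.
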